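(* Consider the firefighter game on the infinite square grid $\mathbb{L}_2=\mathbb{Z}\times\mathbb{Z}$ (described in the context) with an arbitrary ignition vertex. Say that a firefighter sequence $(f_i)_{i\geq 1}$ of non-negative integers satisfies the Condition if there exists $N\geq 1$ with $\sum_{i=1}^N f_i\geq 4N$. (a) (Offline.) For every firefighter sequence $(f_i)_{i\geq 1}$ satisfying the Condition, Player 1, knowing the entire sequence in advance, has a strategy that wins, i.e. contains the fire. (b) (Online.) The Condition is not sufficient for Player 1 to win the online version: for every online strategy of Player 1 there exists a firefighter sequence $(f_i)_{i\geq 1}$ satisfying the Condition against which that strategy loses. Moreover, 5 turns are enough to make any online strategy of Player 1 fail: such a sequence can be chosen so that the Condition holds with some $N\leq 5$ and $f_i=0$ for all $i>5$.
   Context: The grid $\mathbb{L}_2$ has vertex set $\mathbb{Z}\times\mathbb{Z}$, with $(x,y)$ adjacent to $(x',y')$ iff $|x-x'|+|y-y'|=1$. A fire starts at an ignition vertex $v$ at time $0$ (so $v$ is burning). A firefighter sequence is a sequence $(f_i)_{i\geq 1}$ of non-negative integers. At each turn $i\geq 1$: Player 1 chooses at most $f_i$ vertices that are neither burning nor protected and protects them (places a firefighter on each); then the fire spreads from every burning vertex to all of its unprotected neighbours. Once a vertex is burning or protected it remains so forever; unused firefighters are not carried over to later turns. Player 2 wins if at every turn some new vertex starts burning; otherwise (i.e. if at some turn no new vertex catches fire, so the fire is contained) Player 1 wins. In the offline version Player 1 knows the whole sequence $(f_i)_{i\geq 1}$ in advance. In the online version the sequence is chosen by Player 2 (the adversary)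 and only revealed turn by turn: at turn $i$ Player 2 reveals $f_i$ to Player 1 just before Player 1 places firefighters, so an online strategy of Player 1 chooses its moves at turn $i$ based only on $f_1,\dots,f_i$ and the history of the game so far. *)

(* Defs.v *)
From Stdlib Require Import ZArith List Arith Lia.
Import ListNotations.
Open Scope Z_scope.

Definition vertex := (Z * Z)%type.

Definition adj (u w : vertex) : Prop :=
  Z.abs (fst u - fst w) + Z.abs (snd u - snd w) = 1.

(* A firefighter sequence: f i is the number of firefighters at turn i (i >= 1);
   the value f 0 is irrelevant. *)
Definition ff_seq := nat -> nat.

(* Placements of Player 1: pl i = vertices protected at turn i (i >= 1);
   pl 0 is irrelevant. *)
Definition placements := nat -> list vertex.

(* At turn n+1: first the vertices pl (n+1) are protected, then the fire spreads
   from every burning vertex to all its unprotected neighbours. *)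
Fixpoint game_state (v : vertex) (pl : placements) (n : nat)
  : (vertex -> Prop) * (vertex -> Prop) :=
  match n with
  | O => (fun u => u = v, fun _ => False)
  | S m =>
      let B := fst (game_state v pl m) in
      let P := snd (game_state v pl m) in
      let P' := fun u => P u \/ In u (pl (S m)) in
      (fun u => B u \/ (~ P' u /\ exists w, B w /\ adj w u), P')
  end.

Definition burning (v : vertex) (pl : placements) (n : nat) : vertex -> Prop :=
  fst (game_state v pl n).
Definition protected (v : vertex) (pl : placements) (n : nat) : vertex -> Prop :=
  snd (game_state v pl n).

Definition legal_turn (f : ff_seq) (v : vertex) (pl : placements) (i : nat) : Prop :=
  (length (pl i) <= f i)%nat /\
  forall u, In u (pl i) ->
    ~ burning v pl (i - 1) u /\ ~ protected v pl (i - 1) u.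

Definition contained_at (v : vertex) (pl : placements) (n : nat) : Prop :=
  forall u, burning v pl n u -> burning v pl (n - 1) u.

Definition P1_wins (f : ff_seq) (v : vertex) (pl : placements) : Prop :=
  exists n : nat, (1 <= n)%nat /\
    (forall i : nat, (1 <= i <= n)%nat -> legal_turn f v pl i) /\
    contained_at v pl n.

Definition psum (f : ff_seq) (N : nat) : nat :=
  fold_right Nat.add 0%nat (map f (seq 1 N)).

Definition Condition (f : ff_seq) : Prop :=
  exists N : nat, (1 <= N)%nat /\ (4 * N <= psum f N)%nat.

(* Online strategy: placement at turn i as a function of [f 1; ...; f i]
   (the history of the game is determined by these and the strategy). *)
Definition online_strategy := list nat -> list vertex.

Definition online_play (sigma : online_strategy) (f : ff_seq) : placements :=
  fun i => sigma (map f (seq 1 i)).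

Definition online_legal (sigma : online_strategy) (v : vertex) : Prop :=
  forall (f : ff_seq) (i : nat), (1 <= i)%nat -> legal_turn f v (online_play sigma f) i.

(* Main.v *)
Require Import Defs.
From Stdlib Require Import ZArith List Arith.
From Stdlib Require Import Lia Classical FinFun.
Import ListNotations.
Open Scope Z_scope.

Lemma burning_S v pl m u : burning v pl (S m) u <->
  (burning v pl m u \/ (~ (protected v pl m u \/ In u (pl (S m))) /\ exists w, burning v pl m w /\ adj w u)).
Proof. unfold burning, protected; simpl; tauto. Qed.

Lemma protected_S v pl m u : protected v pl (S m) u <-> (protected v pl m u \/ In u (pl (S m))).
Proof. unfold protected; simpl; tauto. Qed.

Lemma burning_0 v pl u : burning v pl 0 u <-> u = v.
Proof. unfold burning; simpl; tauto. Qed.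

Lemma protected_0 v pl u : ~ protected v pl 0 u.
Proof. unfold protected; simpl; tauto. Qed.

Lemma protected_iff v pl m u : protected v pl m u <-> exists i, (1 <= i <= m)%nat /\ In u (pl i).
Proof.
  induction m.
  - split; [intro H; now apply protected_0 in H | intros [i [Hi _]]; lia].
  - rewrite protected_S, IHm. split.
    + intros [[i [Hi Hu]]|H]; [exists i; split; [lia|auto] | exists (S m); split; [lia|auto]].
    + intros [i [Hi Hu]]. destruct (Nat.eq_dec i (S m)); [subst; right; auto| left; exists i; split; [lia|auto]].
Qed.

Lemma protected_mono v pl m m' u : (m <= m')%nat -> protected v pl m u -> protected v pl m' u.
Proof. rewrite !protected_iff. intros H [i [Hi Hu]]. exists i; split; [lia|auto]. Qed.

Lemma burning_mono1 v pl m u : burning v pl m u -> burning v pl (S m) u.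
Proof. rewrite burning_S; tauto. Qed.

Lemma burning_mono v pl m m' u : (m <= m')%nat -> burning v pl m u -> burning v pl m' u.
Proof. induction 1; auto using burning_mono1. Qed.

Definition dist (u w : vertex) : Z := Z.abs (fst u - fst w) + Z.abs (snd u - snd w).

Lemma burning_ball v pl t u : burning v pl t u -> dist v u <= Z.of_nat t.
Proof.
  revert u; induction t; intro u.
  - rewrite burning_0. intros ->. unfold dist. lia.
  - rewrite burning_S. intros [H|[_ [w [Hw Ha]]]].
    + apply IHt in H. lia.
    + apply IHt in Hw. unfold dist, adj in *. lia.
Qed.

Lemma stuck v pl n : (1 <= n)%nat -> contained_at v pl n ->
  forall m, (n <= m)%nat -> forall u, burning v pl m u -> burning v pl (n-1) u.
Proof.
  intros Hn Hc m Hm. induction Hm; intros u.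
  - apply Hc.
  - rewrite burning_S. intros [H|[Hp [w [Hw Ha]]]]; auto.
    apply IHHm in Hw. apply Hc.
    replace n with (S (n-1)) by lia. rewrite burning_S. right. split.
    + intros Hpu. apply Hp. left. apply (protected_mono v pl n m); [lia|].
      replace n with (S (n-1)) by lia. apply protected_S. exact Hpu.
    + exists w; auto.
Qed.

Lemma path_burn v pl (p : nat -> vertex) : p 0%nat = v ->
  (forall k, adj (p k) (p (S k))) ->
  (forall k, ~ protected v pl (S k) (p (S k))) ->
  forall k, burning v pl k (p k).
Proof.
  intros H0 Ha Hp k. induction k.
  - rewrite burning_0; auto.
  - rewrite burning_S. right. split.
    + intro H. apply (Hp k). rewrite protected_S. exact H.
    + exists (p k); auto.
Qed.

Definition veq_dec (u w : vertex) : {u = w} + {u <> w}.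
Proof. decide equality; apply Z.eq_dec. Defined.

Lemma pigeon_count {I : Type} (hit : vertex -> I -> Prop) :
  forall (J : list I) (L : list vertex), NoDup J ->
  (forall u j j', In j J -> In j' J -> hit u j -> hit u j' -> j = j') ->
  (forall j, In j J -> exists u, In u L /\ hit u j) ->
  (length J <= length L)%nat.
Proof.
  induction J as [|j0 J IH]; intros L Hnd Hu Hh; simpl; [lia|].
  inversion Hnd; subst.
  destruct (Hh j0 (or_introl eq_refl)) as [u0 [Hu0 Hh0]].
  assert (length J <= length (remove veq_dec u0 L))%nat.
  { apply IH; auto.
    - intros u j j' Hj Hj'. apply Hu; simpl; auto.
    - intros j Hj. destruct (Hh j (or_intror Hj)) as [u [Hu1 Hu2]].
      exists u. split; auto. apply in_in_remove; auto.
      intro; subst. assert (j = j0) by (apply (Hu u0); simpl; auto). subst; contradiction. }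
  pose proof (remove_length_lt veq_dec L u0 Hu0). lia.
Qed.

Lemma pigeon {I : Type} (hit : vertex -> I -> Prop) (J : list I) (L : list vertex) :
  NoDup J -> (length L < length J)%nat ->
  (forall u j j', In j J -> In j' J -> hit u j -> hit u j' -> j = j') ->
  exists j, In j J /\ forall u, In u L -> ~ hit u j.
Proof.
  intros Hnd Hl Hu. apply NNPP. intro Hn.
  assert (forall j, In j J -> exists u, In u L /\ hit u j).
  { intros j Hj. apply NNPP. intro H2. apply Hn. exists j. split; auto.
    intros u Hu1 Hu2. apply H2. eauto. }
  pose proof (pigeon_count hit J L Hnd Hu H). lia.
Qed.

Lemma NoDup_prod {A B : Type} (l : list A) (l' : list B) :
  NoDup l -> NoDup l' -> NoDup (list_prod l l').
Proof.
  induction 1 as [|a l Ha Hl IH]; intros Hl'; simpl; [constructor|].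
  apply NoDup_app; auto.
  - apply FinFun.Injective_map_NoDup; auto. intros x y H; congruence.
  - intros [a' b] H1 H2. apply in_map_iff in H1. destruct H1 as [b' [E _]]. inversion E; subst.
    apply in_prod_iff in H2. tauto.
Qed.

Definition Jidx (N : nat) := list_prod (seq 0 4) (seq 0 N).

Lemma Jidx_in N q i : In (q,i) (Jidx N) <-> (q < 4 /\ i < N)%nat.
Proof. unfold Jidx. rewrite in_prod_iff, !in_seq. lia. Qed.

Lemma leaf v pl N (F : nat*nat -> nat -> vertex) :
  (2 <= N)%nat ->
  (forall i, (1 <= i)%nat -> i <> 1%nat -> i <> N -> pl i = []) ->
  (length (pl N) < 4*N)%nat ->
  (forall j, In j (Jidx N) -> F j 0%nat = v /\ (forall k, adj (F j k) (F j (S k))) /\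
      (forall k u, In u (pl 1%nat) -> F j (S k) <> u) /\
      (forall k, Z.of_nat k <= dist v (F j k) + 2)) ->
  (forall j j' k k', In j (Jidx N) -> In j' (Jidx N) -> (N <= k)%nat -> (N <= k')%nat ->
      F j k = F j' k' -> j = j') ->
  forall n, (1 <= n)%nat -> ~ contained_at v pl n.
Proof.
  intros HN Hpl Hlen HF Hdisj n Hn Hc.
  destruct (pigeon (fun u j => exists k, (N <= k)%nat /\ u = F j k) (Jidx N) (pl N))
    as [j [Hj Hnh]].
  - unfold Jidx. apply NoDup_prod; apply seq_NoDup.
  - unfold Jidx. rewrite length_prod, !length_seq. lia.
  - intros u j j' Hj Hj' [k [Hk ->]] [k' [Hk' E]]. exact (Hdisj j j' k k' Hj Hj' Hk Hk' E).
  - destruct (HF j Hj) as [H0 [Ha [Hx Hd]]].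
    assert (Hb : forall k, burning v pl k (F j k)).
    { apply path_burn; auto. intros k Hp. apply protected_iff in Hp.
      destruct Hp as [i [Hi Hin]].
      destruct (Nat.eq_dec i 1). { subst. eapply Hx; eauto. }
      destruct (Nat.eq_dec i N). { subst. apply (Hnh _ Hin). exists (S k). split; auto; lia. }
      rewrite Hpl in Hin by lia. destruct Hin. }
    pose proof (Hb (n+2)%nat) as B.
    apply (stuck v pl n Hn Hc (n+2)%nat) in B; [|lia].
    apply burning_ball in B. specialize (Hd (n+2)%nat). lia.
Qed.

Definition rot (u : vertex) : vertex := (- snd u, fst u).
Fixpoint rotn (q : nat) (u : vertex) : vertex :=
  match q with O => u | S q' => rot (rotn q' u) end.
Definition vadd (u w : vertex) : vertex := (fst u + fst w, snd u + snd w).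
Definition norm1 (u : vertex) : Z := Z.abs (fst u) + Z.abs (snd u).

Lemma adj_rot u w : adj u w -> adj (rot u) (rot w).
Proof. unfold adj, rot; simpl; lia. Qed.
Lemma adj_rotn q u w : adj u w -> adj (rotn q u) (rotn q w).
Proof. induction q; simpl; auto using adj_rot. Qed.
Lemma adj_vadd v u w : adj u w -> adj (vadd v u) (vadd v w).
Proof. unfold adj, vadd; simpl; lia. Qed.
Lemma norm_rotn q u : norm1 (rotn q u) = norm1 u.
Proof. induction q; simpl; auto. rewrite <- IHq. unfold norm1, rot. simpl. lia. Qed.
Lemma dist_vadd v u : dist v (vadd v u) = norm1 u.
Proof. unfold dist, vadd, norm1; simpl. lia. Qed.
Lemma rot_inj u w : rot u = rot w -> u = w.
Proof. destruct u, w; unfold rot; simpl; intro H; inversion H; f_equal; lia. Qed.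
Lemma rotn_inj q u w : rotn q u = rotn q w -> u = w.
Proof. induction q; simpl; auto. intro H; apply rot_inj in H; auto. Qed.
Lemma vadd_inj v u w : vadd v u = vadd v w -> u = w.
Proof. destruct u, w; unfold vadd; simpl; intro H; inversion H; f_equal; lia. Qed.
Lemma rotn_0 q : rotn q (0,0) = (0,0).
Proof. induction q; simpl; auto. rewrite IHq. reflexivity. Qed.

Lemma leaf_rel v pl N (G : nat*nat -> nat -> vertex) s x0 :
  (2 <= N)%nat ->
  (forall i, (1 <= i)%nat -> i <> 1%nat -> i <> N -> pl i = []) ->
  (length (pl N) < 4*N)%nat ->
  (forall u, In u (pl 1%nat) -> u = vadd v (rotn s x0)) ->
  (forall j, In j (Jidx N) -> G j 0%nat = (0,0) /\ (forall k, adj (G j k) (G j (S k))) /\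
      (forall k, G j (S k) <> x0) /\
      (forall k, Z.of_nat k <= norm1 (G j k) + 2)) ->
  (forall j j' k k', In j (Jidx N) -> In j' (Jidx N) -> (N <= k)%nat -> (N <= k')%nat ->
      G j k = G j' k' -> j = j') ->
  forall n, (1 <= n)%nat -> ~ contained_at v pl n.
Proof.
  intros HN Hpl Hlen Hx HG Hd.
  apply (leaf v pl N (fun j k => vadd v (rotn s (G j k)))); auto.
  - intros j Hj. destruct (HG j Hj) as [H0 [Ha [Hx0 Hn]]]. repeat split.
    + rewrite H0, rotn_0. destruct v as [a b]; unfold vadd; simpl; f_equal; lia.
    + intro k. apply adj_vadd, adj_rotn, Ha.
    + intros k u Hu E. apply Hx in Hu. subst u. apply vadd_inj, rotn_inj in E. eapply Hx0; eauto.
    + intro k. rewrite dist_vadd, norm_rotn. auto.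
  - intros j j' k k' Hj Hj' Hk Hk' E. apply vadd_inj, rotn_inj in E. eauto.
Qed.

Definition UR (i : Z) (k : nat) : vertex :=
  let K := Z.of_nat k in if K <=? i then (0, K) else (K - i, i).
Definition RU (r i : Z) (k : nat) : vertex :=
  let K := Z.of_nat k in
  if K <=? r - i then (K, 0) else if K <=? r then (r - i, K - (r - i)) else (K - i, i).
Definition SP4 (k : nat) : vertex :=
  match k with 0%nat => (0,0) | 1%nat => (0,1) | 2%nat => (1,1) | 3%nat => (2,1)
  | _ => (Z.of_nat k - 2, 0) end.
Definition SP5 (k : nat) : vertex :=
  match k with 0%nat => (0,0) | 1%nat => (1,0) | 2%nat => (1,1) | 3%nat => (2,1) | 4%nat => (3,1)
  | _ => (Z.of_nat k - 2, 0) end.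
Definition DT (i m : Z) (k : nat) : vertex :=
  let K := Z.of_nat k in
  if K <=? m - 1 + i then UR i k else (K - i - 1, if i =? 0 then -1 else 2).

Ltac splitifs := repeat match goal with
  | |- context [if ?a <=? ?b then _ else _] => destruct (Z.leb_spec a b)
  | |- context [if ?a =? ?b then _ else _] => destruct (Z.eqb_spec a b)
  | H : context [if ?a <=? ?b then _ else _] |- _ => destruct (Z.leb_spec a b)
  | H : context [if ?a =? ?b then _ else _] |- _ => destruct (Z.eqb_spec a b)
  end.

Ltac shp := unfold DT, UR, RU, adj, norm1 in *; rewrite ?Nat2Z.inj_succ in *; cbn [fst snd] in *; splitifs; cbn [fst snd] in *; try lia.

Lemma adj_UR i k : 0 <= i -> adj (UR i k) (UR i (S k)).
Proof. intros; shp. Qed.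
Lemma adj_RU r i k : 0 <= i <= r -> adj (RU r i k) (RU r i (S k)).
Proof. intros; shp. Qed.
Lemma adj_SP4 k : adj (SP4 k) (SP4 (S k)).
Proof. destruct k as [|[|[|[|k]]]]; unfold SP4, adj; cbv beta iota; rewrite ?Nat2Z.inj_succ; cbn [fst snd]; lia. Qed.
Lemma adj_SP5 k : adj (SP5 k) (SP5 (S k)).
Proof. destruct k as [|[|[|[|[|k]]]]]; unfold SP5, adj; cbv beta iota; rewrite ?Nat2Z.inj_succ; cbn [fst snd]; lia. Qed.
Lemma adj_DT i m k : 0 <= i <= 1 -> 2 <= m -> adj (DT i m k) (DT i m (S k)).
Proof. intros; shp. Qed.

Lemma norm_UR i k : 0 <= i -> Z.of_nat k <= norm1 (UR i k) + 2.
Proof. intros; shp. Qed.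
Lemma norm_RU r i k : 0 <= i <= r -> Z.of_nat k <= norm1 (RU r i k) + 2.
Proof. intros; shp. Qed.
Lemma norm_SP4 k : Z.of_nat k <= norm1 (SP4 k) + 2.
Proof. destruct k as [|[|[|[|k]]]]; unfold SP4, norm1; cbv beta iota; rewrite ?Nat2Z.inj_succ; cbn [fst snd]; lia. Qed.
Lemma norm_SP5 k : Z.of_nat k <= norm1 (SP5 k) + 2.
Proof. destruct k as [|[|[|[|[|k]]]]]; unfold SP5, norm1; cbv beta iota; rewrite ?Nat2Z.inj_succ; cbn [fst snd]; lia. Qed.
Lemma norm_DT i m k : 0 <= i <= 1 -> 2 <= m -> Z.of_nat k <= norm1 (DT i m k) + 2.
Proof. intros; shp. Qed.

Lemma UR_0 i : 0 <= i -> UR i 0 = (0,0).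
Proof. intros; unfold UR; simpl. destruct (Z.leb_spec 0 i); [auto|lia]. Qed.
Lemma RU_0 r i : i <= r -> RU r i 0 = (0,0).
Proof. intros; unfold RU; simpl. destruct (Z.leb_spec 0 (r-i)); [auto|lia]. Qed.
Lemma DT_0 i m : 0 <= i -> 1 <= m -> DT i m 0 = (0,0).
Proof. intros; unfold DT; simpl. destruct (Z.leb_spec 0 (m-1+i)); [apply UR_0; auto|lia]. Qed.

Lemma UR_tail i k : Z.of_nat k > i -> UR i k = (Z.of_nat k - i, i).
Proof. intros; unfold UR. destruct (Z.leb_spec (Z.of_nat k) i); [lia|auto]. Qed.
Lemma RU_tail r i k : 0 <= i -> Z.of_nat k >= r -> RU r i k = (Z.of_nat k - i, i).
Proof. intros; unfold RU. splitifs; f_equal; lia. Qed.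

Lemma tail_inj q q' a b a' b' : (q < 4)%nat -> (q' < 4)%nat -> 1 <= a -> 0 <= b -> 1 <= a' -> 0 <= b' ->
  rotn q (a,b) = rotn q' (a',b') -> q = q' /\ b = b'.
Proof.
  intros Hq Hq' ? ? ? ?.
  destruct q as [|[|[|[|q]]]]; try lia; destruct q' as [|[|[|[|q']]]]; try lia;
  unfold rotn, rot; simpl; intro E; inversion E; split; lia.
Qed.

Definition Gnbr (j : nat*nat) (k : nat) : vertex :=
  let '(q,i) := j in rotn q
   (if Nat.eqb q 0 then (if Nat.eqb i 0 then SP4 k else UR (Z.of_nat i) k)
    else if Nat.eqb q 3 then RU 4 (Z.of_nat i) k else UR (Z.of_nat i) k).
Definition Gdiag (j : nat*nat) (k : nat) : vertex :=
  let '(q,i) := j in rotn q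
   (if andb (Nat.eqb q 0) (Nat.eqb i 1) then RU 3 1 k else UR (Z.of_nat i) k).
Definition Gax (j : nat*nat) (k : nat) : vertex :=
  let '(q,i) := j in rotn q
   (if Nat.eqb q 0 then (if Nat.eqb i 0 then SP5 k else UR (Z.of_nat i) k)
    else if Nat.eqb q 3 then RU 5 (Z.of_nat i) k else UR (Z.of_nat i) k).

Ltac qcases q := destruct q as [|[|[|[|q]]]]; try lia.

Ltac bsplit := repeat match goal with
  | |- context [Nat.eqb ?a ?b] => destruct (Nat.eqb_spec a b)
  | |- context [andb ?a ?b] => destruct a eqn:?, b eqn:?; simpl andb
  end.

Lemma Gnbr_ok j : In j (Jidx 4) -> Gnbr j 0%nat = (0,0) /\ (forall k, adj (Gnbr j k) (Gnbr j (S k))) /\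
      (forall k, Gnbr j (S k) <> (1,0)) /\ (forall k, Z.of_nat k <= norm1 (Gnbr j k) + 2).
Proof.
  destruct j as [q i]; rewrite Jidx_in; intros [Hq Hi]. unfold Gnbr. repeat split.
  - bsplit; subst; rewrite ?UR_0, ?RU_0, rotn_0 by lia; reflexivity.
  - intro k. apply adj_rotn. bsplit; auto using adj_SP4, adj_UR, adj_RU with zarith; apply adj_RU; lia.
  - intro k. qcases q; bsplit; try lia; cbv [rotn rot];
    try (destruct k as [|[|[|[|k]]]]; unfold SP4; cbv beta iota; rewrite ?Nat2Z.inj_succ; intro E; apply pair_equal_spec in E; destruct E; lia);
    shp; intro E; apply pair_equal_spec in E; destruct E; lia.
  - intro k. rewrite norm_rotn. bsplit; auto using norm_SP4; try (apply norm_RU; lia); try (apply norm_UR; lia).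
Qed.

Lemma Gnbr_tail j k : In j (Jidx 4) -> (4 <= k)%nat ->
  exists a, 1 <= a /\ Gnbr j k = rotn (fst j) (a, Z.of_nat (snd j)).
Proof.
  destruct j as [q i]; rewrite Jidx_in; intros [Hq Hi] Hk. unfold Gnbr; simpl fst; simpl snd.
  bsplit; subst.
  - exists (Z.of_nat k - 2). split; [lia|]. f_equal.
    destruct k as [|[|[|[|k]]]]; try lia. reflexivity.
  - exists (Z.of_nat k - Z.of_nat i). split; [lia|]. rewrite UR_tail; auto; lia.
  - exists (Z.of_nat k - Z.of_nat i). split; [lia|]. rewrite RU_tail; auto; lia.
  - exists (Z.of_nat k - Z.of_nat i). split; [lia|]. rewrite UR_tail; auto; lia.
Qed.

Lemma disj_from_tail (G : nat*nat -> nat -> vertex) N :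
  (forall j k, In j (Jidx N) -> (N <= k)%nat -> exists a, 1 <= a /\ G j k = rotn (fst j) (a, Z.of_nat (snd j))) ->
  forall j j' k k', In j (Jidx N) -> In j' (Jidx N) -> (N <= k)%nat -> (N <= k')%nat ->
      G j k = G j' k' -> j = j'.
Proof.
  intros HT j j' k k' Hj Hj' Hk Hk' E.
  destruct (HT j k Hj Hk) as [a [Ha Ea]]. destruct (HT j' k' Hj' Hk') as [a' [Ha' Ea']].
  rewrite Ea, Ea' in E. destruct j as [q i], j' as [q' i']. simpl in E.
  apply Jidx_in in Hj, Hj'.
  apply tail_inj in E; try lia. destruct E as [-> E]. f_equal. lia.
Qed.

Lemma Gdiag_ok j : In j (Jidx 3) -> Gdiag j 0%nat = (0,0) /\ (forall k, adj (Gdiag j k) (Gdiag j (S k))) /\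
      (forall k, Gdiag j (S k) <> (1,1)) /\ (forall k, Z.of_nat k <= norm1 (Gdiag j k) + 2).
Proof.
  destruct j as [q i]; rewrite Jidx_in; intros [Hq Hi]. unfold Gdiag. repeat split.
  - bsplit; subst; rewrite ?UR_0, ?RU_0, rotn_0 by lia; reflexivity.
  - intro k. apply adj_rotn. bsplit; try (apply adj_RU; lia); try (apply adj_UR; lia).
  - intro k. apply Nat.eqb_eq in Heqb || apply Nat.eqb_neq in Heqb || idtac.
    qcases q; bsplit; cbv [rotn rot];
    repeat match goal with H : Nat.eqb _ _ = _ |- _ => first [apply Nat.eqb_eq in H | apply Nat.eqb_neq in H] end;
    shp; intro E; apply pair_equal_spec in E; destruct E; lia.
  - intro k. rewrite norm_rotn. bsplit; try (apply norm_RU; lia); try (apply norm_UR; lia).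
Qed.

Lemma Gdiag_tail j k : In j (Jidx 3) -> (3 <= k)%nat ->
  exists a, 1 <= a /\ Gdiag j k = rotn (fst j) (a, Z.of_nat (snd j)).
Proof.
  destruct j as [q i]; rewrite Jidx_in; intros [Hq Hi] Hk. unfold Gdiag; simpl fst; simpl snd.
  exists (Z.of_nat k - Z.of_nat i). split; [lia|].
  destruct (andb _ _) eqn:E.
  - apply Bool.andb_true_iff in E. destruct E as [E1 E2]. apply Nat.eqb_eq in E2. subst.
    rewrite RU_tail; auto; lia.
  - rewrite UR_tail; auto; lia.
Qed.

Lemma Gax_ok j : In j (Jidx 5) -> Gax j 0%nat = (0,0) /\ (forall k, adj (Gax j k) (Gax j (S k))) /\
      (forall k, Gax j (S k) <> (2,0)) /\ (forall k, Z.of_nat k <= norm1 (Gax j k) + 2).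
Proof.
  destruct j as [q i]; rewrite Jidx_in; intros [Hq Hi]. unfold Gax. repeat split.
  - bsplit; subst; rewrite ?UR_0, ?RU_0, rotn_0 by lia; reflexivity.
  - intro k. apply adj_rotn. bsplit; auto using adj_SP5; try (apply adj_RU; lia); try (apply adj_UR; lia).
  - intro k. qcases q; bsplit; try lia; cbv [rotn rot];
    try (destruct k as [|[|[|[|[|k]]]]]; unfold SP5; cbv beta iota; rewrite ?Nat2Z.inj_succ; intro E; apply pair_equal_spec in E; destruct E; lia);
    shp; intro E; apply pair_equal_spec in E; destruct E; lia.
  - intro k. rewrite norm_rotn. bsplit; auto using norm_SP5; try (apply norm_RU; lia); try (apply norm_UR; lia).
Qed.

Lemma Gax_tail j k : In j (Jidx 5) -> (5 <= k)%nat ->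
  exists a, 1 <= a /\ Gax j k = rotn (fst j) (a, Z.of_nat (snd j)).
Proof.
  destruct j as [q i]; rewrite Jidx_in; intros [Hq Hi] Hk. unfold Gax; simpl fst; simpl snd.
  bsplit; subst.
  - exists (Z.of_nat k - 2). split; [lia|]. f_equal.
    destruct k as [|[|[|[|[|k]]]]]; try lia. reflexivity.
  - exists (Z.of_nat k - Z.of_nat i). split; [lia|]. rewrite UR_tail; auto; lia.
  - exists (Z.of_nat k - Z.of_nat i). split; [lia|]. rewrite RU_tail; auto; lia.
  - exists (Z.of_nat k - Z.of_nat i). split; [lia|]. rewrite UR_tail; auto; lia.
Qed.

Definition Gfar (y : vertex) (j : nat*nat) (k : nat) : vertex :=
  let '(q,i) := j in rotn q
   (let z := rotn (4 - q) y in
    if snd z =? Z.of_nat i then (if 2 <=? fst z then DT (Z.of_nat i) (fst z) k else UR (Z.of_nat i) k)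
    else UR (Z.of_nat i) k).

Lemma Gfar_ok y j : 3 <= norm1 y -> In j (Jidx 2) ->
  Gfar y j 0%nat = (0,0) /\ (forall k, adj (Gfar y j k) (Gfar y j (S k))) /\
      (forall k, Gfar y j (S k) <> y) /\ (forall k, Z.of_nat k <= norm1 (Gfar y j k) + 2).
Proof.
  intros Hy. destruct j as [q i]; rewrite Jidx_in; intros [Hq Hi]. unfold Gfar. repeat split.
  - splitifs; rewrite ?DT_0, ?UR_0, rotn_0 by lia; reflexivity.
  - intro k. apply adj_rotn. splitifs; try (apply adj_DT; lia); try (apply adj_UR; lia).
  - intro k. destruct y as [y1 y2]. unfold norm1 in Hy; cbn [fst snd] in Hy.
    qcases q; cbv [rotn rot Nat.sub]; cbn [fst snd];
    (destruct i as [|[|i]]; [ | | lia ]); cbn [Z.of_nat];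
    shp; intro E; apply pair_equal_spec in E; destruct E; lia.
  - intro k. rewrite norm_rotn. splitifs; try (apply norm_DT; lia); try (apply norm_UR; lia).
Qed.

Lemma Gfar_disj y j j' k k' : 3 <= norm1 y -> In j (Jidx 2) -> In j' (Jidx 2) -> (2 <= k)%nat -> (2 <= k')%nat ->
  Gfar y j k = Gfar y j' k' -> j = j'.
Proof.
  intros Hy. destruct j as [q i], j' as [q' i']; rewrite !Jidx_in; intros [Hq Hi] [Hq' Hi'] Hk Hk'.
  destruct y as [y1 y2]. unfold norm1 in Hy; cbn [fst snd] in Hy. unfold Gfar.
  qcases q; qcases q'; cbv [rotn rot Nat.sub]; cbn [fst snd];
  (destruct i as [|[|i]]; [ | | lia ]); (destruct i' as [|[|i']]; [ | | lia ]); cbn [Z.of_nat];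
  try reflexivity;
  shp; intro E; apply pair_equal_spec in E; destruct E; lia.
Qed.

Definition fN (N : nat) : ff_seq := fun i =>
  if Nat.eqb i 1 then 1%nat else if Nat.eqb i N then (4*N-1)%nat else 0%nat.

Lemma lose_with v sigma N (G : nat*nat -> nat -> vertex) s x0 :
  online_legal sigma v -> (2 <= N <= 5)%nat ->
  (forall u, In u (sigma [1%nat]) -> u = vadd v (rotn s x0)) ->
  (forall j, In j (Jidx N) -> G j 0%nat = (0,0) /\ (forall k, adj (G j k) (G j (S k))) /\
      (forall k, G j (S k) <> x0) /\
      (forall k, Z.of_nat k <= norm1 (G j k) + 2)) ->
  (forall j j' k k', In j (Jidx N) -> In j' (Jidx N) -> (N <= k)%nat -> (N <= k')%nat ->
      G j k = G j' k' -> j = j') ->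
  exists f : ff_seq,
        (exists N : nat, (1 <= N <= 5)%nat /\ (4 * N <= psum f N)%nat) /\
        (forall i : nat, (5 < i)%nat -> f i = 0%nat) /\
        ~ P1_wins f v (online_play sigma f).
Proof.
  intros Hleg HN Hx HG Hd. exists (fN N). split; [|split].
  - exists N. split; [lia|].
    assert (N = 2 \/ N = 3 \/ N = 4 \/ N = 5)%nat as HN' by lia.
    destruct HN' as [ -> | [ -> | [ -> | -> ]]]; vm_compute; lia.
  - intros i Hi. unfold fN. destruct (Nat.eqb_spec i 1); [lia|]. destruct (Nat.eqb_spec i N); [lia|]. reflexivity.
  - intros [n [Hn [_ Hc]]].
    set (pl := online_play sigma (fN N)) in *.
    assert (Hlen : forall i, (1 <= i)%nat -> (length (pl i) <= fN N i)%nat).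
    { intros i Hi. apply (Hleg (fN N) i Hi). }
    revert Hc. apply (leaf_rel v pl N G s x0); auto; try lia.
    + intros i Hi H1 H2. specialize (Hlen i Hi). unfold fN in Hlen.
      destruct (Nat.eqb_spec i 1); [lia|]. destruct (Nat.eqb_spec i N); [lia|].
      destruct (pl i); simpl in *; [reflexivity|lia].
    + specialize (Hlen N ltac:(lia)). unfold fN in Hlen.
      destruct (Nat.eqb_spec N 1); [lia|]. rewrite Nat.eqb_refl in Hlen. lia.
Qed.

Definition classify (v : vertex) (X : list vertex) : nat :=
  match X with
  | [] => 2%nat
  | x :: _ => let a := fst x - fst v in let b := snd x - snd v in
      if Z.abs a + Z.abs b =? 1 then 4%nat
      else if andb (Z.abs a =? 1) (Z.abs b =? 1) then 3%nat
      else if Z.abs a + Z.abs b =? 2 then 5%nat else 2%nat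
  end.

Theorem partb : forall (v : vertex) (sigma : online_strategy),
      online_legal sigma v ->
      exists f : ff_seq,
        (exists N : nat, (1 <= N <= 5)%nat /\ (4 * N <= psum f N)%nat) /\
        (forall i : nat, (5 < i)%nat -> f i = 0%nat) /\
        ~ P1_wins f v (online_play sigma f).
Proof.
  intros v sigma Hleg.
  assert (H1 : forall f : ff_seq, f 1%nat = 1%nat -> online_play sigma f 1%nat = sigma [1%nat]).
  { intros f Hf. unfold online_play. simpl. rewrite Hf. reflexivity. }
  set (g := fun i : nat => if Nat.eqb i 1 then 1%nat else 0%nat).
  assert (Hl1 : (length (sigma [1%nat]) <= 1)%nat).
  { pose proof (proj1 (Hleg g 1%nat ltac:(lia))) as H. rewrite H1 in H by reflexivity. exact H. }
  assert (Hnv : forall u, In u (sigma [1%nat]) -> u <> v).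
  { intros u Hu E. pose proof (proj2 (Hleg g 1%nat ltac:(lia)) u) as H.
    rewrite H1 in H by reflexivity. destruct (H Hu) as [H' _]. apply H'. simpl. rewrite burning_0. auto. }
  destruct (sigma [1%nat]) as [|x rest] eqn:HX.
  - apply (lose_with v sigma 2 (Gfar (3,0)) 0 (3,0)); auto; try lia.
    + rewrite HX. intros u [].
    + intros j Hj. apply Gfar_ok; auto. unfold norm1; simpl; lia.
    + intros j j' k k' Hj Hj' Hk Hk' E. apply (Gfar_disj (3,0) j j' k k'); auto. unfold norm1; simpl; lia.
  - destruct rest as [|x' rest]; [|simpl in Hl1; lia].
    assert (Hxv : x <> v) by (apply Hnv; simpl; auto).
    destruct x as [x1 x2], v as [v1 v2].
    remember (x1 - v1) as a eqn:Ha. remember (x2 - v2) as b eqn:Hb.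
    assert (Hxe : forall s x0, rotn s x0 = (a, b) -> forall u, In u (sigma [1%nat]) -> u = vadd (v1,v2) (rotn s x0)).
    { intros s x0 E u Hu. rewrite HX in Hu. destruct Hu as [<-|[]]. rewrite E. unfold vadd; simpl. f_equal; lia. }
    destruct (Z.eqb_spec (Z.abs a + Z.abs b) 1).
    +
      assert (exists s, rotn s (1,0) = (a,b)) as [s Hs].
      { assert ((a = 1 /\ b = 0) \/ (a = 0 /\ b = 1) \/ (a = -1 /\ b = 0) \/ (a = 0 /\ b = -1)) as Hc by lia.
        destruct Hc as [[ -> -> ] | [[ -> -> ] | [[ -> -> ] | [ -> -> ]]]];
        [exists 0%nat|exists 1%nat|exists 2%nat|exists 3%nat]; reflexivity. }
      apply (lose_with (v1,v2) sigma 4 Gnbr s (1,0)); auto; try lia.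
      * apply Gnbr_ok.
      * apply disj_from_tail. intros. apply Gnbr_tail; auto.
    + destruct (Z.eqb_spec (Z.abs a) 1); destruct (Z.eqb_spec (Z.abs b) 1); simpl andb.
      * assert (exists s, rotn s (1,1) = (a,b)) as [s Hs].
        { assert ((a = 1 /\ b = 1) \/ (a = -1 /\ b = 1) \/ (a = -1 /\ b = -1) \/ (a = 1 /\ b = -1)) as Hc by lia.
          destruct Hc as [[ -> -> ] | [[ -> -> ] | [[ -> -> ] | [ -> -> ]]]];
          [exists 0%nat|exists 1%nat|exists 2%nat|exists 3%nat]; reflexivity. }
        apply (lose_with (v1,v2) sigma 3 Gdiag s (1,1)); auto; try lia.
        -- apply Gdiag_ok.
        -- apply disj_from_tail. intros. apply Gdiag_tail; auto.
      * destruct (Z.eqb_spec (Z.abs a + Z.abs b) 2).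
        -- first [ exfalso; lia | idtac ].
           all: assert (exists s, rotn s (2,0) = (a,b)) as [s Hs] by (
            assert ((a = 2 /\ b = 0) \/ (a = 0 /\ b = 2) \/ (a = -2 /\ b = 0) \/ (a = 0 /\ b = -2)) as Hc by lia;
            destruct Hc as [[ -> -> ] | [[ -> -> ] | [[ -> -> ] | [ -> -> ]]]];
            [exists 0%nat|exists 1%nat|exists 2%nat|exists 3%nat]; reflexivity).
           all: apply (lose_with (v1,v2) sigma 5 Gax s (2,0)); auto; try lia.
           all: try apply Gax_ok.
           all: try (apply disj_from_tail; intros; apply Gax_tail; auto).
        -- assert (Hn3 : 3 <= norm1 (a,b)).
           { unfold norm1; simpl.
             assert (a <> 0 \/ b <> 0) by (destruct (Z.eq_dec a 0); destruct (Z.eq_dec b 0); [|lia|lia|lia];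
               exfalso; apply Hxv; f_equal; lia).
             lia. }
           apply (lose_with (v1,v2) sigma 2 (Gfar (a,b)) 0 (a,b)); auto; try lia.
           ++ intros j Hj; apply Gfar_ok; auto.
           ++ intros j j' k k' Hj Hj' Hk Hk' E; apply (Gfar_disj (a,b) j j' k k'); auto.
      * destruct (Z.eqb_spec (Z.abs a + Z.abs b) 2).
        -- first [ exfalso; lia | idtac ].
           all: assert (exists s, rotn s (2,0) = (a,b)) as [s Hs] by (
            assert ((a = 2 /\ b = 0) \/ (a = 0 /\ b = 2) \/ (a = -2 /\ b = 0) \/ (a = 0 /\ b = -2)) as Hc by lia;
            destruct Hc as [[ -> -> ] | [[ -> -> ] | [[ -> -> ] | [ -> -> ]]]];
            [exists 0%nat|exists 1%nat|exists 2%nat|exists 3%nat]; reflexivity).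
           all: apply (lose_with (v1,v2) sigma 5 Gax s (2,0)); auto; try lia.
           all: try apply Gax_ok.
           all: try (apply disj_from_tail; intros; apply Gax_tail; auto).
        -- assert (Hn3 : 3 <= norm1 (a,b)).
           { unfold norm1; simpl.
             assert (a <> 0 \/ b <> 0) by (destruct (Z.eq_dec a 0); destruct (Z.eq_dec b 0); [|lia|lia|lia];
               exfalso; apply Hxv; f_equal; lia).
             lia. }
           apply (lose_with (v1,v2) sigma 2 (Gfar (a,b)) 0 (a,b)); auto; try lia.
           ++ intros j Hj; apply Gfar_ok; auto.
           ++ intros j j' k k' Hj Hj' Hk Hk' E; apply (Gfar_disj (a,b) j j' k k'); auto.
      * destruct (Z.eqb_spec (Z.abs a + Z.abs b) 2).
        -- first [ exfalso; lia | idtac ].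
           all: assert (exists s, rotn s (2,0) = (a,b)) as [s Hs] by (
            assert ((a = 2 /\ b = 0) \/ (a = 0 /\ b = 2) \/ (a = -2 /\ b = 0) \/ (a = 0 /\ b = -2)) as Hc by lia;
            destruct Hc as [[ -> -> ] | [[ -> -> ] | [[ -> -> ] | [ -> -> ]]]];
            [exists 0%nat|exists 1%nat|exists 2%nat|exists 3%nat]; reflexivity).
           all: apply (lose_with (v1,v2) sigma 5 Gax s (2,0)); auto; try lia.
           all: try apply Gax_ok.
           all: try (apply disj_from_tail; intros; apply Gax_tail; auto).
        -- assert (Hn3 : 3 <= norm1 (a,b)).
           { unfold norm1; simpl.
             assert (a <> 0 \/ b <> 0) by (destruct (Z.eq_dec a 0); destruct (Z.eq_dec b 0); [|lia|lia|lia];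
               exfalso; apply Hxv; f_equal; lia).
             lia. }
           apply (lose_with (v1,v2) sigma 2 (Gfar (a,b)) 0 (a,b)); auto; try lia.
           ++ intros j Hj; apply Gfar_ok; auto.
           ++ intros j j' k k' Hj Hj' Hk Hk' E; apply (Gfar_disj (a,b) j j' k k'); auto.
Qed.

Lemma fold_add_acc (l : list nat) a : fold_right Nat.add a l = (fold_right Nat.add 0 l + a)%nat.
Proof. induction l; simpl; lia. Qed.

Lemma psum_S f n : psum f (S n) = (psum f n + f (S n))%nat.
Proof.
  unfold psum. rewrite seq_S, map_app. simpl. rewrite fold_right_app. simpl.
  rewrite fold_add_acc. f_equal. lia.
Qed.

Lemma psum_mono f m n : (m <= n)%nat -> (psum f m <= psum f n)%nat.
Proof. induction 1; auto. rewrite psum_S. lia. Qed.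

Lemma psum_locate f N k : (k < psum f N)%nat ->
  exists i, (1 <= i <= N)%nat /\ (psum f (i-1) <= k < psum f i)%nat.
Proof.
  induction N; intros Hk.
  - unfold psum in Hk; simpl in Hk; lia.
  - rewrite psum_S in Hk. destruct (Nat.lt_ge_cases k (psum f N)).
    + destruct (IHN H) as [i [Hi Hi']]. exists i; split; [lia|auto].
    + exists (S N). split; [lia|]. rewrite psum_S. replace (S N - 1)%nat with N by lia. lia.
Qed.

Definition sph (v : vertex) (N : nat) : list vertex :=
  map (fun j => vadd v (rotn (fst j) (Z.of_nat N - Z.of_nat (snd j), Z.of_nat (snd j)))) (Jidx N).

Lemma sph_len v N : length (sph v N) = (4 * N)%nat.
Proof. unfold sph, Jidx. rewrite length_map, length_prod, !length_seq. lia. Qed.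

Lemma sph_nodup v N : NoDup (sph v N).
Proof.
  unfold sph. apply Injective_map_NoDup_in.
  - intros [q i] [q' i'] H H' E. apply Jidx_in in H, H'. simpl in E.
    apply vadd_inj in E. apply tail_inj in E; try lia. destruct E as [-> E]. f_equal; lia.
  - unfold Jidx. apply NoDup_prod; apply seq_NoDup.
Qed.

Lemma sph_dist v N u : In u (sph v N) -> dist v u = Z.of_nat N.
Proof.
  unfold sph. rewrite in_map_iff. intros [[q i] [<- H]]. apply Jidx_in in H. simpl.
  rewrite dist_vadd, norm_rotn. unfold norm1; simpl. lia.
Qed.

Lemma sph_full v N u : (1 <= N)%nat -> dist v u = Z.of_nat N -> In u (sph v N).
Proof.
  intros HN Hd. unfold sph. apply in_map_iff.
  destruct u as [u1 u2], v as [v1 v2]. unfold dist in Hd; simpl in Hd.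
  remember (u1 - v1) as a eqn:Ha. remember (u2 - v2) as b eqn:Hb.
  assert (Hu : (u1,u2) = vadd (v1,v2) (a,b)) by (unfold vadd; simpl; f_equal; lia).
  rewrite Hu.
  assert ((1 <= a /\ 0 <= b) \/ (a <= 0 /\ 1 <= b) \/ (a <= -1 /\ b <= 0) \/ (0 <= a /\ b <= -1)) as Hc by lia.
  destruct Hc as [[H1 H2]|[[H1 H2]|[[H1 H2]|[H1 H2]]]].
  - exists (0%nat, Z.to_nat b). split; [|apply Jidx_in; lia].
    simpl. f_equal. f_equal; lia.
  - exists (1%nat, Z.to_nat (-a)). split; [|apply Jidx_in; lia].
    cbv [rotn rot]; cbn [fst snd]. f_equal. f_equal; lia.
  - exists (2%nat, Z.to_nat (-b)). split; [|apply Jidx_in; lia].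
    cbv [rotn rot]; cbn [fst snd]. f_equal. f_equal; lia.
  - exists (3%nat, Z.to_nat a). split; [|apply Jidx_in; lia].
    cbv [rotn rot]; cbn [fst snd]. f_equal. f_equal; lia.
Qed.

Definition plA (v : vertex) (f : ff_seq) (N : nat) : placements := fun i =>
  if andb (Nat.leb 1 i) (Nat.leb i N)
  then map (fun k => nth k (sph v N) v) (filter (fun k => Nat.ltb k (4*N)) (seq (psum f (i-1)) (f i)))
  else [].

Lemma plA_in v f N i u : In u (plA v f N i) ->
  (1 <= i <= N)%nat /\ exists k, (psum f (i-1) <= k < psum f i)%nat /\ (k < 4*N)%nat /\ u = nth k (sph v N) v.
Proof.
  unfold plA. destruct (Nat.leb_spec 1 i), (Nat.leb_spec i N); simpl; try (intros []).
  intro Hin. split; [lia|]. apply in_map_iff in Hin. destruct Hin as [k [<- Hk]].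
  apply filter_In in Hk. destruct Hk as [Hk Hk']. apply in_seq in Hk. apply Nat.ltb_lt in Hk'.
  exists k. split; [|split; auto].
  replace i with (S (i-1)) at 2 by lia. rewrite psum_S. replace (S (i-1)) with i by lia. lia.
Qed.

Lemma plA_dist v f N i u : In u (plA v f N i) -> dist v u = Z.of_nat N.
Proof.
  intro H. apply plA_in in H. destruct H as [_ [k [_ [Hk ->]]]].
  apply sph_dist. apply nth_In. rewrite sph_len. lia.
Qed.

Theorem parta : forall (v : vertex) (f : ff_seq), Condition f -> exists pl : placements, P1_wins f v pl.
Proof.
  intros v f [N [HN HS]]. exists (plA v f N). exists N. split; [lia|]. split.
  - intros i Hi. split.
    + unfold plA. destruct (andb _ _); simpl; [|lia]. rewrite length_map.
      etransitivity; [apply filter_length_le|]. rewrite length_seq. lia.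
    + intros u Hu. split.
      * intro Hb. apply burning_ball in Hb. apply plA_dist in Hu. lia.
      * intro Hp. apply protected_iff in Hp. destruct Hp as [i' [Hi' Hu']].
        apply plA_in in Hu. destruct Hu as [_ [k [Hk1 [Hk2 Ek]]]].
        apply plA_in in Hu'. destruct Hu' as [_ [k' [Hk1' [Hk2' Ek']]]].
        assert (k = k').
        { apply (proj1 (NoDup_nth (sph v N) v) (sph_nodup v N)); rewrite ?sph_len; try lia. congruence. }
        subst k'. pose proof (psum_mono f i' (i-1) ltac:(lia)). lia.
  -
    assert (HA : forall t, (t <= N - 1)%nat -> forall u, dist v u <= Z.of_nat t -> burning v (plA v f N) t u).
    { induction t; intros Ht u Hd.
      - apply burning_0. destruct u, v; unfold dist in Hd; simpl in Hd. f_equal; lia.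
      - destruct (Z.le_gt_cases (dist v u) (Z.of_nat t)).
        + apply burning_mono1. apply IHt; auto; lia.
        + apply burning_S. right. split.
          * intros [Hp|Hp].
            -- apply protected_iff in Hp. destruct Hp as [i [_ Hi]]. apply plA_dist in Hi. lia.
            -- apply plA_dist in Hp. lia.
          * destruct u as [u1 u2], v as [v1 v2]. unfold dist in *; simpl in *.
            destruct (Z.eq_dec u1 v1).
            -- exists (u1, if Z.ltb v2 u2 then u2 - 1 else u2 + 1). split.
               ++ apply IHt; [lia|]. unfold dist; simpl. destruct (Z.ltb_spec v2 u2); lia.
               ++ unfold adj; simpl. destruct (Z.ltb_spec v2 u2); lia.
            -- exists (if Z.ltb v1 u1 then u1 - 1 else u1 + 1, u2). split.
               ++ apply IHt; [lia|]. unfold dist; simpl. destruct (Z.ltb_spec v1 u1); lia.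
               ++ unfold adj; simpl. destruct (Z.ltb_spec v1 u1); lia. }
    intros u Hu0. assert (Hu : burning v (plA v f N) (S (N-1)) u) by (replace (S (N-1)) with N by lia; exact Hu0). apply burning_S in Hu.
    destruct Hu as [Hu|[Hp [w [Hw Ha]]]]; [exact Hu|].
    apply burning_ball in Hw.
    assert (Hdu : dist v u <= Z.of_nat N) by (unfold dist, adj in *; lia).
    destruct (Z.eq_dec (dist v u) (Z.of_nat N)) as [E|E].
    + exfalso. apply Hp.
      apply sph_full in E; auto.
      destruct (In_nth _ _ v E) as [k [Hk Ek]]. rewrite sph_len in Hk.
      destruct (psum_locate f N k) as [i [Hi Hi']]; [lia|].
      change (protected v (plA v f N) (N-1) u \/ In u (plA v f N (S (N-1)))).
      apply (proj1 (protected_S v (plA v f N) (N-1) u)). replace (S (N-1)) with N by lia.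
      apply protected_iff. exists i. split; [lia|].
      unfold plA. destruct (Nat.leb_spec 1 i), (Nat.leb_spec i N); try lia. simpl.
      apply in_map_iff. exists k. split; auto. apply filter_In. split.
      * apply in_seq. replace i with (S (i-1)) in Hi' at 2 by lia. rewrite psum_S in Hi'.
        replace (S (i-1)) with i in Hi' by lia. lia.
      * apply Nat.ltb_lt. lia.
    + apply HA; [lia|]. lia.
Qed.

Theorem theorem1 :
  (* (a) offline *)
  (forall (v : vertex) (f : ff_seq),
      Condition f -> exists pl : placements, P1_wins f v pl)
  /\
  (* (b) online, with 5 turns *)
  (forall (v : vertex) (sigma : online_strategy),
      online_legal sigma v ->
      exists f : ff_seq,
        (exists N : nat, (1 <= N <= 5)%nat /\ (4 * N <= psum f N)%nat) /\
        (forall i : nat, (5 < i)%nat -> f i = 0%nat) /\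
        ~ P1_wins f v (online_play sigma f)).
Proof.
  split; [exact parta | exact partb].
Qed.

Print Assumptions theorem1.
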